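(* Let $\beta_2,\beta_3,\delta_1,\delta_2,\delta_3,\mu_1,\mu_2,\eta,K_1,K_2,K_3$ be positive real numbers and consider the system \[ \begin{aligned} \dot{H} &= - \delta_1 H - \eta SH + \mu_1C\left(1-\frac{H}{K_1}\right), \\ \dot{S} &= \beta_2 S \left(1-\frac{S}{K_2}\right) - \delta_2 S - \eta S H + \mu_2 C \left(1-\frac{S}{K_2}\right), \\ \dot{C} &= \beta_3 C \left(1-\frac{C}{K_3}\right) - \delta_3 C + \eta S H . \end{aligned} \] Let $D=[0, K_1] \times [0, K_2] \times [0, \tilde{K}_3]$ with \[ \tilde{K}_3 := \frac{1}{2} \left( \frac{\beta_3 - \delta_3}{\beta_3} K_3 + \sqrt{\left(\frac{\beta_3-\delta_3}{\beta_3}\right)^2 K_3^2 + 8\frac{\eta}{\beta_3} K_1 K_2K_3} \right). \] Then: (a) Every fixed point of the system lying in $\mathbb{R}_{\ge 0}^3$ with at least one vanishing component is either $(0,0,0)$ or $\left(0, \frac{\beta_2-\delta_2}{\beta_2} K_2, 0 \right)$. (b) Every fixed point $(H^\star, S^\star, C^\star)$ in the interior of $D$ satisfies \[ \frac{\beta_3 - \delta_3}{\beta_3} K_3 < C^\star < \frac{\beta_3 - \delta_3 + \mu_1}{\beta_3} K_3 . \] (c) In each of the following cases there exists at least one fixed point in the interior of $D$: (i) $\beta_3 > \delta_3$; (ii) $\beta_3 = \delta_3$ and $\beta_2-\delta_2 > -\frac{\eta \mu_1 \mu_2 K_3}{\beta_3 \delta_1}$; (iii) $-\mu_1 < \beta_3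 - \delta_3 < 0$ and $\beta_2 - \delta_2 > -\frac{\beta_2\delta_1(\beta_3-\delta_3)}{\eta K_2 (\beta_3-\delta_3+\mu_1)}$.
   Context: The system is a population model (mycobiont host $H$, photobiont symbiont $S$, lichen complex $C$) in which all parameters are birth, death, formation rates and carrying capacities. A fixed point is a point of $\mathbb{R}^3$ at which the right-hand side of the system vanishes. *)

(* Defs.v *)
From Stdlib Require Import Reals.
Open Scope R_scope.

Definition dH (d1 eta mu1 K1 : R) (H S C : R) : R :=
  - d1 * H - eta * S * H + mu1 * C * (1 - H / K1).

Definition dS (b2 d2 eta mu2 K2 : R) (H S C : R) : R :=
  b2 * S * (1 - S / K2) - d2 * S - eta * S * H + mu2 * C * (1 - S / K2).

Definition dC (b3 d3 eta K3 : R) (H S C : R) : R :=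
  b3 * C * (1 - C / K3) - d3 * C + eta * S * H.

Definition is_fixed_point (b2 b3 d1 d2 d3 mu1 mu2 eta K1 K2 K3 : R)
  (H S C : R) : Prop :=
  dH d1 eta mu1 K1 H S C = 0 /\
  dS b2 d2 eta mu2 K2 H S C = 0 /\
  dC b3 d3 eta K3 H S C = 0.

Definition K3tilde (b3 d3 eta K1 K2 K3 : R) : R :=
  / 2 * ((b3 - d3) / b3 * K3 +
         sqrt (((b3 - d3) / b3) ^ 2 * K3 ^ 2 + 8 * (eta / b3) * K1 * K2 * K3)).

Definition in_interior_D (b3 d3 eta K1 K2 K3 : R) (H S C : R) : Prop :=
  0 < H < K1 /\ 0 < S < K2 /\ 0 < C < K3tilde b3 d3 eta K1 K2 K3.

(* Main.v *)
Require Import Defs.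
From Stdlib Require Import Reals Lra Psatz Ranalysis5.
From Coquelicot Require Import Coquelicot.
Open Scope R_scope.
Ltac pos := unfold Rdiv; repeat (apply Rmult_lt_0_compat || apply Rinv_0_lt_compat); try lra.

Lemma cR_plus (f g : R -> R) x : continuous f x -> continuous g x -> continuous (fun y => f y + g y) x.
Proof. intros; exact (continuous_plus f g x H H0). Qed.
Lemma cR_mult (f g : R -> R) x : continuous f x -> continuous g x -> continuous (fun y => f y * g y) x.
Proof. intros; exact (continuous_mult f g x H H0). Qed.
Lemma cR_opp (f : R -> R) x : continuous f x -> continuous (fun y => - f y) x.
Proof. intros; exact (continuous_opp f x H). Qed.
Lemma cR_const (c x : R) : continuous (fun _ : R => c) x.
Proof. exact (continuous_const c x). Qed.

Lemma Rmin_form a b : Rmin a b = / 2 * (a + b + - Rabs (a + - b)).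
Proof. unfold Rmin, Rabs. destruct (Rle_dec a b); destruct (Rcase_abs (a + - b)); lra. Qed.

Lemma cR_min (f : R -> R) K x : continuous f x -> continuous (fun y => Rmin (f y) K) x.
Proof.
  intros hf. apply continuous_ext with (f := fun y => / 2 * (f y + K + - Rabs (f y + - K))).
  { intro. symmetry. apply Rmin_form. }
  apply cR_mult; [apply cR_const|].
  apply cR_plus; [apply cR_plus; [exact hf| apply cR_const]|].
  apply cR_opp. apply continuous_Rabs_comp. apply cR_plus; [exact hf|apply cR_const].
Qed.

Definition pf b3 d3 eta K3 C := (b3 * C / K3 - (b3 - d3)) / eta.
Definition hf b3 d3 d1 mu1 eta K1 K3 C := (mu1 - eta * pf b3 d3 eta K3 C) / (d1 + mu1 * C / K1).
Definition sf b3 d3 d1 mu1 eta K1 K3 C := pf b3 d3 eta K3 C / hf b3 d3 d1 mu1 eta K1 K3 C.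

Lemma sf_cont b3 d3 d1 mu1 eta K1 K3 C :
  0 < eta -> 0 < K1 -> 0 < K3 -> d1 + mu1 * C / K1 <> 0 -> hf b3 d3 d1 mu1 eta K1 K3 C <> 0 ->
  continuous (sf b3 d3 d1 mu1 eta K1 K3) C.
Proof.
  intros he hK1 hK3 hD hh. apply (ex_derive_continuous (K:=R_AbsRing) (V:=R_NormedModule)).
  unfold sf, hf, pf in *. auto_derive. repeat split; try lra.
  all: try assumption.
Qed.


Definition mf b3 d3 d1 mu1 eta K1 K2 K3 C := Rmin (sf b3 d3 d1 mu1 eta K1 K3 C) K2.

Definition Ft b2 b3 d1 d2 d3 mu1 mu2 eta K1 K2 K3 C :=
  mu2 * C + mf b3 d3 d1 mu1 eta K1 K2 K3 C *
    (b2 - d2 - eta * (C * hf b3 d3 d1 mu1 eta K1 K3 C) - mu2 * C / K2)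
  + - (b2 / K2) * (mf b3 d3 d1 mu1 eta K1 K2 K3 C * mf b3 d3 d1 mu1 eta K1 K2 K3 C).

Definition sg b3 d3 d1 mu1 eta K1 K3 C := b3 / (K3 * eta * hf b3 d3 d1 mu1 eta K1 K3 C).

Definition Gt b2 b3 d1 d2 d3 mu1 mu2 eta K1 K2 K3 C :=
  sg b3 d3 d1 mu1 eta K1 K3 C * (b2 - d2 - eta * (C * hf b3 d3 d1 mu1 eta K1 K3 C))
  + - (sg b3 d3 d1 mu1 eta K1 K3 C * b2 / K2 + mu2 / K2) * mf b3 d3 d1 mu1 eta K1 K2 K3 C + mu2.

Lemma dcont (f : R -> R) x : ex_derive f x -> continuous f x.
Proof. apply (ex_derive_continuous (K:=R_AbsRing) (V:=R_NormedModule)). Qed.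

Lemma Ft_cont b2 b3 d1 d2 d3 mu1 mu2 eta K1 K2 K3 C :
  0 < eta -> 0 < K1 -> 0 < K2 -> 0 < K3 -> d1 + mu1 * C / K1 <> 0 -> hf b3 d3 d1 mu1 eta K1 K3 C <> 0 ->
  continuous (Ft b2 b3 d1 d2 d3 mu1 mu2 eta K1 K2 K3) C.
Proof.
  intros he hK1 hK2 hK3 hD hh.
  assert (hm : continuous (mf b3 d3 d1 mu1 eta K1 K2 K3) C).
  { unfold mf. apply cR_min. apply sf_cont; assumption. }
  unfold Ft. apply cR_plus; [apply cR_plus|].
  - apply dcont. auto_derive. auto.
  - apply cR_mult; [exact hm|]. apply dcont. unfold hf, pf in *. auto_derive. repeat split; lra.
  - apply cR_mult; [apply cR_const|]. apply cR_mult; exact hm.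
Qed.

Lemma Gt_cont b2 b3 d1 d2 d3 mu1 mu2 eta K1 K2 K3 C :
  0 < eta -> 0 < K1 -> 0 < K2 -> 0 < K3 -> d1 + mu1 * C / K1 <> 0 -> hf b3 d3 d1 mu1 eta K1 K3 C <> 0 ->
  continuous (Gt b2 b3 d1 d2 d3 mu1 mu2 eta K1 K2 K3) C.
Proof.
  intros he hK1 hK2 hK3 hD hh.
  assert (hm : continuous (mf b3 d3 d1 mu1 eta K1 K2 K3) C).
  { unfold mf. apply cR_min. apply sf_cont; assumption. }
  assert (hK : K3 * eta * hf b3 d3 d1 mu1 eta K1 K3 C <> 0).
  { apply Rmult_integral_contrapositive; split; [|assumption].
    apply Rmult_integral_contrapositive; split; lra. }
  unfold Gt. apply cR_plus; [apply cR_plus|].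
  - apply dcont. unfold sg, hf, pf in *. auto_derive. repeat split; try lra; assumption.
  - apply cR_mult; [|exact hm]. apply dcont. unfold sg, hf, pf in *. auto_derive. repeat split; try lra; assumption.
  - apply cR_const.
Qed.

Lemma K3t_bound (b3 d3 eta K1 K2 K3 C : R) :
  0 < b3 -> 0 < eta -> 0 < K1 -> 0 < K2 -> 0 < K3 -> 0 < C ->
  b3 * C * C / K3 - (b3 - d3) * C < 2 * eta * K1 * K2 ->
  C < K3tilde b3 d3 eta K1 K2 K3.
Proof.
  intros hb3 he hK1 hK2 hK3 hC h.
  unfold K3tilde.
  set (a := (b3 - d3) / b3).
  set (D := a ^ 2 * K3 ^ 2 + 8 * (eta / b3) * K1 * K2 * K3).
  assert (hD : 0 <= D).
  { unfold D. assert (0 < eta / b3) by (unfold Rdiv; apply Rmult_lt_0_compat; [lra| apply Rinv_0_lt_compat; lra]).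
    assert (0 < eta / b3 * K1 * K2 * K3) by pos.
    assert (0 <= (a * K3) ^ 2) by apply pow2_ge_0.
    replace (a ^ 2 * K3 ^ 2) with ((a * K3) ^ 2) by ring. lra. }
  assert (hs := sqrt_sqrt D hD). assert (hs0 := sqrt_pos D).
  set (q := sqrt D) in *.
  assert (hq : b3 * C * C - b3 * a * K3 * C - 2 * eta * K1 * K2 * K3 < 0).
  { unfold a. replace (b3 * ((b3 - d3) / b3) * K3 * C) with ((b3 - d3) * C * K3) by (field; lra).
    apply (Rmult_lt_compat_r K3) in h; [|lra].
    replace ((b3 * C * C / K3 - (b3 - d3) * C) * K3) with (b3 * C * C - (b3 - d3) * C * K3) in h by (field; lra).
    lra. }
  assert (hDe : b3 * D = b3 * a ^ 2 * K3 ^ 2 + 8 * eta * K1 * K2 * K3).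
  { unfold D. field. lra. }
  destruct (Rlt_or_le C (/ 2 * (a * K3 + q))) as [|hge]; [assumption|].
  exfalso.
  assert (h1 : 0 <= (C - / 2 * (a * K3 + q)) * (C - / 2 * (a * K3 - q))).
  { apply Rmult_le_pos; lra. }
  assert (h2 : (C - / 2 * (a * K3 + q)) * (C - / 2 * (a * K3 - q)) = C * C - a * K3 * C - / 4 * (D - a^2 * K3^2)).
  { replace D with (q * q) by exact hs. field. }
  rewrite h2 in h1.
  apply (Rmult_le_compat_l b3) in h1; [|lra].
  nra.
Qed.

Lemma interior_aux (b2 b3 d1 d2 d3 mu1 mu2 eta K1 K2 K3 H S C : R) :
  0 < b3 -> 0 < d1 -> 0 < mu1 -> 0 < eta -> 0 < K1 -> 0 < K2 -> 0 < K3 ->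
  is_fixed_point b2 b3 d1 d2 d3 mu1 mu2 eta K1 K2 K3 H S C ->
  0 < H -> 0 < S -> S < K2 -> 0 < C ->
  H < K1 /\ C < K3tilde b3 d3 eta K1 K2 K3.
Proof.
  intros hb3 hd1 hmu1 he hK1 hK2 hK3 [eH [eS eC]] hH hS hS2 hC.
  unfold dH, dS, dC in *.
  assert (hHK : H < K1).
  { destruct (Rlt_or_le H K1) as [|hge]; [assumption|exfalso].
    assert (0 <= H / K1 - 1).
    { apply (Rmult_le_reg_r K1); [lra|]. replace ((H / K1 - 1) * K1) with (H - K1) by (field; lra). lra. }
    assert (0 < eta * S * H) by pos.
    assert (0 <= mu1 * C * (H / K1 - 1)) by (apply Rmult_le_pos; [nra|lra]).
    nra. }
  split; [assumption|].
  apply K3t_bound; try assumption.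
  assert (e : b3 * C * C / K3 - (b3 - d3) * C = eta * S * H).
  { replace (b3 * C * C / K3) with (b3 * C * (C / K3)) by (field; lra). nra. }
  rewrite e.
  assert (S * H < K2 * K1) by nra.
  assert (0 < eta * K1 * K2) by pos.
  nra.
Qed.

Lemma partA_H0 (b2 b3 d1 d2 d3 mu1 mu2 eta K1 K2 K3 S C : R) :
  0 < b2 -> 0 < mu1 -> 0 < K1 -> 0 < K2 ->
  is_fixed_point b2 b3 d1 d2 d3 mu1 mu2 eta K1 K2 K3 0 S C ->
  (S = 0 /\ C = 0) \/ (S = (b2 - d2) / b2 * K2 /\ C = 0).
Proof.
  intros hb2 hmu1 hK1 hK2 [eH [eS eC]]. unfold dH, dS, dC in *.
  assert (hC : C = 0).
  { replace (0 / K1) with 0 in eH by (field; lra). nra. }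
  subst C.
  assert (e : S * (b2 - d2 - b2 * S / K2) = 0).
  { rewrite <- eS. field. lra. }
  apply Rmult_integral in e. destruct e as [e|e]; [left; lra|right; split; [|reflexivity]].
  apply (Rmult_eq_reg_l (b2 / K2)); [|apply Rgt_not_eq; pos].
  replace (b2 / K2 * ((b2 - d2) / b2 * K2)) with (b2 - d2) by (field; lra).
  replace (b2 / K2 * S) with (b2 * S / K2) by (field; lra). lra.
Qed.

Lemma partA (b2 b3 d1 d2 d3 mu1 mu2 eta K1 K2 K3 H S C : R) :
  0 < b2 -> 0 < d1 -> 0 < mu1 -> 0 < mu2 -> 0 < eta -> 0 < K1 -> 0 < K2 ->
  is_fixed_point b2 b3 d1 d2 d3 mu1 mu2 eta K1 K2 K3 H S C ->
  (H = 0 \/ S = 0 \/ C = 0) ->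
  (H = 0 /\ S = 0 /\ C = 0) \/ (H = 0 /\ S = (b2 - d2) / b2 * K2 /\ C = 0).
Proof.
  intros hb2 hd1 hmu1 hmu2 he hK1 hK2 fp hz.
  assert (hS0 : S = 0 -> H = 0).
  { intro; subst S. destruct fp as [eH [eS eC]]. unfold dH, dS, dC in *.
    assert (C = 0).
    { replace (0 / K2) with 0 in eS by (field; lra). nra. }
    subst C. nra. }
  assert (hH : H = 0).
  { destruct hz as [h|[h|h]]; auto.
    subst C. destruct fp as [eH [eS eC]]. unfold dC in eC.
    assert (e : eta * (S * H) = 0) by nra.
    apply Rmult_integral in e. destruct e as [e|e]; [lra|].
    apply Rmult_integral in e. destruct e as [e|e]; auto. }
  subst H.
  destruct (partA_H0 b2 b3 d1 d2 d3 mu1 mu2 eta K1 K2 K3 S C) as [[-> ->]|[-> ->]]; auto.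
Qed.

Lemma partB (b2 b3 d1 d2 d3 mu1 mu2 eta K1 K2 K3 H S C : R) :
  0 < b3 -> 0 < d1 -> 0 < mu1 -> 0 < eta -> 0 < K1 -> 0 < K2 -> 0 < K3 ->
  is_fixed_point b2 b3 d1 d2 d3 mu1 mu2 eta K1 K2 K3 H S C ->
  in_interior_D b3 d3 eta K1 K2 K3 H S C ->
  (b3 - d3) / b3 * K3 < C /\ C < (b3 - d3 + mu1) / b3 * K3.
Proof.
  intros hb3 hd1 hmu1 he hK1 hK2 hK3 [eH [eS eC]] [[h1 h2] [[h3 h4] [h5 h6]]].
  unfold dH, dS, dC in *.
  assert (hSH : 0 < eta * S * H) by pos.
  assert (eC' : b3 * C * (K3 - C) - d3 * C * K3 + eta * S * H * K3 = 0).
  { rewrite <- (Rmult_0_l K3), <- eC. field. lra. }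
  assert (eH' : - d1 * H * K1 - eta * S * H * K1 + mu1 * C * (K1 - H) = 0).
  { rewrite <- (Rmult_0_l K1), <- eH. field. lra. }
  split.
  - apply (Rmult_lt_reg_l b3); [lra|].
    replace (b3 * ((b3 - d3) / b3 * K3)) with ((b3 - d3) * K3) by (field; lra).
    assert (0 < eta * S * H * K3) by pos. nra.
  - apply (Rmult_lt_reg_l b3); [lra|].
    replace (b3 * ((b3 - d3 + mu1) / b3 * K3)) with ((b3 - d3 + mu1) * K3) by (field; lra).
    assert (hk : eta * S * H < mu1 * C).
    { assert (0 < d1 * H * K1) by pos. assert (0 < mu1 * C * H) by pos.
      apply (Rmult_lt_reg_r K1); [lra|]. nra. }
    (* C (b3 C - (b3-d3) K3) = eta S H K3 < mu1 C K3 *)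
    assert (C * (b3 * C - (b3 - d3) * K3) < C * (mu1 * K3)) by nra.
    apply Rmult_lt_reg_l in H0; [|lra]. lra.
Qed.

Lemma pf_lin b3 d3 eta K3 a b : 0 < eta -> 0 < K3 ->
  pf b3 d3 eta K3 b - pf b3 d3 eta K3 a = b3 * (b - a) / (K3 * eta).
Proof. intros. unfold pf. field. lra. Qed.

Lemma hf_pos b3 d3 d1 mu1 eta K1 K3 a : 0 < d1 -> 0 < mu1 -> 0 < K1 -> 0 <= a ->
  eta * pf b3 d3 eta K3 a < mu1 -> 0 < hf b3 d3 d1 mu1 eta K1 K3 a /\ 0 < d1 + mu1 * a / K1.
Proof.
  intros. assert (0 <= mu1 * a / K1).
  { unfold Rdiv. apply Rmult_le_pos; [apply Rmult_le_pos; lra|]. left; apply Rinv_0_lt_compat; lra. }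
  split; [|lra]. unfold hf. pos.
Qed.

Lemma finish b2 b3 d1 d2 d3 mu1 mu2 eta K1 K2 K3 z :
  0 < b3 -> 0 < d1 -> 0 < mu1 -> 0 < eta -> 0 < K1 -> 0 < K2 -> 0 < K3 ->
  0 < z -> 0 < pf b3 d3 eta K3 z -> 0 < hf b3 d3 d1 mu1 eta K1 K3 z ->
  sf b3 d3 d1 mu1 eta K1 K3 z < K2 ->
  dS b2 d2 eta mu2 K2 (z * hf b3 d3 d1 mu1 eta K1 K3 z) (sf b3 d3 d1 mu1 eta K1 K3 z) z = 0 ->
  exists H S C : R,
     is_fixed_point b2 b3 d1 d2 d3 mu1 mu2 eta K1 K2 K3 H S C /\
     in_interior_D b3 d3 eta K1 K2 K3 H S C.
Proof.
  intros hb3 hd1 hmu1 he hK1 hK2 hK3 hz hp hh hs eS.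
  assert (hD : 0 < d1 + mu1 * z / K1).
  { assert (0 < mu1 * z / K1) by pos. lra. }
  assert (hN : mu1 - eta * pf b3 d3 eta K3 z <> 0).
  { intro e. unfold hf in hh. rewrite e in hh. unfold Rdiv in hh. lra. }
  assert (hN2 : mu1 * K3 - (b3 * z - (b3 - d3) * K3) <> 0).
  { intro e. apply hN. unfold pf. assert (e2 : b3 * z = (mu1 + (b3 - d3)) * K3) by lra.
    rewrite e2. field. lra. }
  assert (fp : is_fixed_point b2 b3 d1 d2 d3 mu1 mu2 eta K1 K2 K3
           (z * hf b3 d3 d1 mu1 eta K1 K3 z) (sf b3 d3 d1 mu1 eta K1 K3 z) z).
  { split; [|split; [exact eS|]].
    - unfold dH, sf, hf in *. field. repeat split; try lra; try nra; exact hN.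
    - unfold dC, sf, hf in *. unfold pf in *. field. repeat split; try lra; try nra; exact hN2. }
  assert (hS : 0 < sf b3 d3 d1 mu1 eta K1 K3 z) by (unfold sf, Rdiv; apply Rmult_lt_0_compat; [lra | apply Rinv_0_lt_compat; lra]).
  assert (hH : 0 < z * hf b3 d3 d1 mu1 eta K1 K3 z) by (apply Rmult_lt_0_compat; lra).
  destruct (interior_aux b2 b3 d1 d2 d3 mu1 mu2 eta K1 K2 K3 _ _ _ hb3 hd1 hmu1 he hK1 hK2 hK3 fp hH hS hs hz) as [h1 h2].
  exists (z * hf b3 d3 d1 mu1 eta K1 K3 z), (sf b3 d3 d1 mu1 eta K1 K3 z), z.
  split; [exact fp|]. repeat split; lra.
Qed.

Lemma exists_y b3 d3 d1 mu1 eta K1 K2 K3 x :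
  0 < b3 -> 0 < d1 -> 0 < mu1 -> 0 < eta -> 0 < K1 -> 0 < K2 -> 0 < K3 ->
  0 <= x -> eta * pf b3 d3 eta K3 x < mu1 ->
  exists y, x < y /\ eta * pf b3 d3 eta K3 y < mu1 /\ K2 <= sf b3 d3 d1 mu1 eta K1 K3 y.
Proof.
  intros hb3 hd1 hmu1 he hK1 hK2 hK3 hx hpx.
  set (q := K2 * mu1 / (d1 + eta * K2)).
  assert (hq : eta * q < mu1).
  { unfold q. apply (Rmult_lt_reg_r (d1 + eta * K2)); [nra|].
    replace (eta * (K2 * mu1 / (d1 + eta * K2)) * (d1 + eta * K2)) with (eta * K2 * mu1) by (field; nra). nra. }
  assert (hq0 : 0 < q) by (unfold q; pos; nra).
  set (m := Rmax q (pf b3 d3 eta K3 x)).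
  assert (hm1 : q <= m) by apply Rmax_l. assert (hm2 : pf b3 d3 eta K3 x <= m) by apply Rmax_r.
  assert (hm3 : eta * m < mu1).
  { unfold m, Rmax. destruct (Rle_dec q (pf b3 d3 eta K3 x)); lra. }
  set (pi := (m + mu1 / eta) / 2).
  assert (hme : eta * (mu1 / eta) = mu1) by (field; lra).
  assert (hpi1 : m < pi).
  { unfold pi. apply (Rmult_lt_reg_l eta); [lra|]. nra. }
  assert (hpi2 : eta * pi < mu1).
  { unfold pi. replace (eta * ((m + mu1 / eta) / 2)) with ((eta * m + mu1) / 2) by (field; lra). lra. }
  set (y := K3 * (eta * pi + b3 - d3) / b3).
  assert (hpy : pf b3 d3 eta K3 y = pi) by (unfold pf, y; field; lra).
  exists y.
  assert (hl := pf_lin b3 d3 eta K3 x y he hK3).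
  assert (hxy : x < y).
  { destruct (Rlt_or_le x y) as [|hle]; [assumption|exfalso].
    assert (b3 * (y - x) / (K3 * eta) <= 0).
    { unfold Rdiv. apply Rmult_le_0_r; [nra|]. left; pos. }
    lra. }
  split; [exact hxy|]. split; [rewrite hpy; exact hpi2|].
  destruct (hf_pos b3 d3 d1 mu1 eta K1 K3 y hd1 hmu1 hK1 ltac:(lra) ltac:(rewrite hpy; lra)) as [hh hD].
  assert (hDy : d1 <= d1 + mu1 * y / K1).
  { assert (0 <= mu1 * y / K1). { unfold Rdiv. apply Rmult_le_pos; [nra|]. left; pos. } lra. }
  assert (e : sf b3 d3 d1 mu1 eta K1 K3 y = pi * (d1 + mu1 * y / K1) / (mu1 - eta * pi)).
  { unfold sf, hf. rewrite hpy. field. repeat split; try lra; nra. }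
  rewrite e. apply (Rmult_le_reg_r (mu1 - eta * pi)); [lra|].
  replace (pi * (d1 + mu1 * y / K1) / (mu1 - eta * pi) * (mu1 - eta * pi)) with (pi * (d1 + mu1 * y / K1)) by (field; lra).
  assert (hqq : q * (d1 + eta * K2) = K2 * mu1) by (unfold q; field; nra).
  assert (0 < pi) by lra.
  assert (pi * d1 <= pi * (d1 + mu1 * y / K1)) by (apply Rmult_le_compat_l; lra).
  assert (q * (d1 + eta * K2) <= pi * (d1 + eta * K2)) by (apply Rmult_le_compat_r; nra).
  lra.
Qed.

Lemma Ft_eq b2 b3 d1 d2 d3 mu1 mu2 eta K1 K2 K3 C : 0 < K2 ->
  Ft b2 b3 d1 d2 d3 mu1 mu2 eta K1 K2 K3 C =
  dS b2 d2 eta mu2 K2 (C * hf b3 d3 d1 mu1 eta K1 K3 C) (mf b3 d3 d1 mu1 eta K1 K2 K3 C) C.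
Proof. intros. unfold Ft, dS. field. lra. Qed.

Lemma Ft_neg b2 b3 d1 d2 d3 mu1 mu2 eta K1 K2 K3 C :
  0 < d2 -> 0 < eta -> 0 < K2 -> 0 <= C -> 0 < hf b3 d3 d1 mu1 eta K1 K3 C ->
  K2 <= sf b3 d3 d1 mu1 eta K1 K3 C -> Ft b2 b3 d1 d2 d3 mu1 mu2 eta K1 K2 K3 C < 0.
Proof.
  intros hd2 he hK2 hC hh hs.
  assert (hm : mf b3 d3 d1 mu1 eta K1 K2 K3 C = K2) by (unfold mf; apply Rmin_right; lra).
  unfold Ft. rewrite hm.
  replace (mu2 * C + K2 * (b2 - d2 - eta * (C * hf b3 d3 d1 mu1 eta K1 K3 C) - mu2 * C / K2) +
    - (b2 / K2) * (K2 * K2)) with (- (K2 * d2) - K2 * eta * (C * hf b3 d3 d1 mu1 eta K1 K3 C)) by (field; lra).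
  assert (0 < K2 * d2) by pos. assert (0 <= C * hf b3 d3 d1 mu1 eta K1 K3 C) by nra.
  assert (0 < K2 * eta) by pos. nra.
Qed.

Lemma Gt_neg b2 b3 d1 d2 d3 mu1 mu2 eta K1 K2 K3 C :
  0 < b3 -> 0 < d2 -> 0 < eta -> 0 < K2 -> 0 < K3 -> 0 <= C -> 0 < hf b3 d3 d1 mu1 eta K1 K3 C ->
  K2 <= sf b3 d3 d1 mu1 eta K1 K3 C -> Gt b2 b3 d1 d2 d3 mu1 mu2 eta K1 K2 K3 C < 0.
Proof.
  intros hb3 hd2 he hK2 hK3 hC hh hs.
  assert (hm : mf b3 d3 d1 mu1 eta K1 K2 K3 C = K2) by (unfold mf; apply Rmin_right; lra).
  assert (hg : 0 < sg b3 d3 d1 mu1 eta K1 K3 C) by (unfold sg, Rdiv; apply Rmult_lt_0_compat; [lra|apply Rinv_0_lt_compat; apply Rmult_lt_0_compat; [apply Rmult_lt_0_compat|]; lra]).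
  unfold Gt. rewrite hm.
  set (g := sg b3 d3 d1 mu1 eta K1 K3 C) in *.
  replace (g * (b2 - d2 - eta * (C * hf b3 d3 d1 mu1 eta K1 K3 C)) + - (g * b2 / K2 + mu2 / K2) * K2 + mu2)
    with (- (g * d2) - g * eta * (C * hf b3 d3 d1 mu1 eta K1 K3 C)) by (field; lra).
  assert (0 < g * d2) by (apply Rmult_lt_0_compat; lra). assert (0 <= C * hf b3 d3 d1 mu1 eta K1 K3 C) by nra.
  assert (0 < g * eta) by (apply Rmult_lt_0_compat; lra). nra.
Qed.

Lemma root_gen (f : R -> R) x y :
  x < y -> (forall a, x <= a <= y -> continuous f a) -> 0 < f x -> f y < 0 ->
  exists z, x < z <= y /\ f z = 0.
Proof.
  intros hxy hc hx hy.
  destruct (IVT_interv (fun a => - f a) x y) as [z [hz ez]].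
  - intros a ha. apply continuity_pt_filterlim. apply cR_opp. apply hc; assumption.
  - assumption.
  - lra.
  - lra.
  - exists z. assert (f z = 0) by lra. split; [|assumption].
    split; [|lra]. destruct (Req_dec x z) as [e|]; [subst z; lra|lra].
Qed.

Lemma case_F b2 b3 d1 d2 d3 mu1 mu2 eta K1 K2 K3 x :
  0 < b3 -> 0 < d1 -> 0 < d2 -> 0 < mu1 -> 0 < eta -> 0 < K1 -> 0 < K2 -> 0 < K3 ->
  0 <= x -> 0 <= pf b3 d3 eta K3 x -> eta * pf b3 d3 eta K3 x < mu1 ->
  0 < Ft b2 b3 d1 d2 d3 mu1 mu2 eta K1 K2 K3 x ->
  exists H S C : R,
     is_fixed_point b2 b3 d1 d2 d3 mu1 mu2 eta K1 K2 K3 H S C /\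
     in_interior_D b3 d3 eta K1 K2 K3 H S C.
Proof.
  intros hb3 hd1 hd2 hmu1 he hK1 hK2 hK3 hx hp0 hpx hF.
  destruct (exists_y b3 d3 d1 mu1 eta K1 K2 K3 x hb3 hd1 hmu1 he hK1 hK2 hK3 hx hpx) as [y [hxy [hpy hsy]]].
  assert (hmono : forall a b, a <= b -> pf b3 d3 eta K3 a <= pf b3 d3 eta K3 b).
  { intros a b hab. assert (hl := pf_lin b3 d3 eta K3 a b he hK3).
    assert (0 <= b3 * (b - a) / (K3 * eta)).
    { unfold Rdiv. apply Rmult_le_pos; [nra|]. left; pos. } lra. }
  assert (hsm : forall a b, a < b -> pf b3 d3 eta K3 a < pf b3 d3 eta K3 b).
  { intros a b hab. assert (hl := pf_lin b3 d3 eta K3 a b he hK3).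
    assert (0 < b3 * (b - a) / (K3 * eta)) by (pos; nra). lra. }
  assert (hin : forall a, x <= a <= y -> 0 < hf b3 d3 d1 mu1 eta K1 K3 a /\ 0 < d1 + mu1 * a / K1).
  { intros a ha. apply hf_pos; try lra. assert (hh := hmono a y (proj2 ha)). nra. }
  destruct (root_gen (Ft b2 b3 d1 d2 d3 mu1 mu2 eta K1 K2 K3) x y hxy) as [z [hz ez]].
  - intros a ha. destruct (hin a ha). apply Ft_cont; lra.
  - exact hF.
  - destruct (hin y ltac:(lra)). apply Ft_neg; lra.
  - destruct (hin z ltac:(lra)) as [hhz hDz].
    assert (hpz := hsm x z (proj1 hz)).
    assert (hsz : sf b3 d3 d1 mu1 eta K1 K3 z < K2).
    { destruct (Rlt_or_le (sf b3 d3 d1 mu1 eta K1 K3 z) K2) as [|hge]; [assumption|exfalso].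
      assert (Ft b2 b3 d1 d2 d3 mu1 mu2 eta K1 K2 K3 z < 0) by (apply Ft_neg; lra). lra. }
    assert (hm : mf b3 d3 d1 mu1 eta K1 K2 K3 z = sf b3 d3 d1 mu1 eta K1 K3 z) by (unfold mf; apply Rmin_left; lra).
    apply (finish b2 b3 d1 d2 d3 mu1 mu2 eta K1 K2 K3 z); try lra.
    rewrite <- hm, <- Ft_eq by lra. exact ez.
Qed.

Lemma case_G b2 b3 d1 d2 d3 mu1 mu2 eta K1 K2 K3 :
  0 < b3 -> 0 < d1 -> 0 < d2 -> 0 < mu1 -> 0 < eta -> 0 < K1 -> 0 < K2 -> 0 < K3 ->
  b3 = d3 ->
  0 < Gt b2 b3 d1 d2 d3 mu1 mu2 eta K1 K2 K3 0 ->
  exists H S C : R,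
     is_fixed_point b2 b3 d1 d2 d3 mu1 mu2 eta K1 K2 K3 H S C /\
     in_interior_D b3 d3 eta K1 K2 K3 H S C.
Proof.
  intros hb3 hd1 hd2 hmu1 he hK1 hK2 hK3 e33 hG.
  assert (hp0 : pf b3 d3 eta K3 0 = 0) by (unfold pf; rewrite e33; field; lra).
  destruct (exists_y b3 d3 d1 mu1 eta K1 K2 K3 0 hb3 hd1 hmu1 he hK1 hK2 hK3 ltac:(lra) ltac:(rewrite hp0; lra)) as [y [hxy [hpy hsy]]].
  assert (hmono : forall a b, a <= b -> pf b3 d3 eta K3 a <= pf b3 d3 eta K3 b).
  { intros a b hab. assert (hl := pf_lin b3 d3 eta K3 a b he hK3).
    assert (0 <= b3 * (b - a) / (K3 * eta)).
    { unfold Rdiv. apply Rmult_le_pos; [nra|]. left; pos. } lra. }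
  assert (hsm : forall a b, a < b -> pf b3 d3 eta K3 a < pf b3 d3 eta K3 b).
  { intros a b hab. assert (hl := pf_lin b3 d3 eta K3 a b he hK3).
    assert (0 < b3 * (b - a) / (K3 * eta)) by (pos; nra). lra. }
  assert (hin : forall a, 0 <= a <= y -> 0 < hf b3 d3 d1 mu1 eta K1 K3 a /\ 0 < d1 + mu1 * a / K1).
  { intros a ha. apply hf_pos; try lra. assert (hh := hmono a y (proj2 ha)). nra. }
  destruct (root_gen (Gt b2 b3 d1 d2 d3 mu1 mu2 eta K1 K2 K3) 0 y hxy) as [z [hz ez]].
  - intros a ha. destruct (hin a ha). apply Gt_cont; lra.
  - exact hG.
  - destruct (hin y ltac:(lra)). apply Gt_neg; lra.
  - destruct (hin z ltac:(lra)) as [hhz hDz].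
    assert (hpz := hsm 0 z (proj1 hz)).
    assert (hsz : sf b3 d3 d1 mu1 eta K1 K3 z < K2).
    { destruct (Rlt_or_le (sf b3 d3 d1 mu1 eta K1 K3 z) K2) as [|hge]; [assumption|exfalso].
      assert (Gt b2 b3 d1 d2 d3 mu1 mu2 eta K1 K2 K3 z < 0) by (apply Gt_neg; lra). lra. }
    assert (hm : mf b3 d3 d1 mu1 eta K1 K2 K3 z = sf b3 d3 d1 mu1 eta K1 K3 z) by (unfold mf; apply Rmin_left; lra).
    assert (hsg : sf b3 d3 d1 mu1 eta K1 K3 z = z * sg b3 d3 d1 mu1 eta K1 K3 z).
    { unfold sf, sg. unfold pf at 1. replace (b3 - d3) with 0 by lra. field. repeat split; lra. }
    apply (finish b2 b3 d1 d2 d3 mu1 mu2 eta K1 K2 K3 z); try lra.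
    rewrite <- hm, <- Ft_eq by lra.
    replace (Ft b2 b3 d1 d2 d3 mu1 mu2 eta K1 K2 K3 z) with (z * Gt b2 b3 d1 d2 d3 mu1 mu2 eta K1 K2 K3 z).
    { rewrite ez. ring. }
    unfold Ft, Gt. rewrite hm, hsg. field. lra.
Qed.

Theorem theorem2 (b2 b3 d1 d2 d3 mu1 mu2 eta K1 K2 K3 : R)
  (hb2 : 0 < b2) (hb3 : 0 < b3) (hd1 : 0 < d1) (hd2 : 0 < d2) (hd3 : 0 < d3)
  (hmu1 : 0 < mu1) (hmu2 : 0 < mu2) (heta : 0 < eta)
  (hK1 : 0 < K1) (hK2 : 0 < K2) (hK3 : 0 < K3) :
  (forall H S C : R,
     is_fixed_point b2 b3 d1 d2 d3 mu1 mu2 eta K1 K2 K3 H S C ->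
     0 <= H -> 0 <= S -> 0 <= C ->
     (H = 0 \/ S = 0 \/ C = 0) ->
     (H = 0 /\ S = 0 /\ C = 0) \/
     (H = 0 /\ S = (b2 - d2) / b2 * K2 /\ C = 0)) /\
  (forall H S C : R,
     is_fixed_point b2 b3 d1 d2 d3 mu1 mu2 eta K1 K2 K3 H S C ->
     in_interior_D b3 d3 eta K1 K2 K3 H S C ->
     (b3 - d3) / b3 * K3 < C /\ C < (b3 - d3 + mu1) / b3 * K3) /\
  ((b3 > d3 \/
    (b3 = d3 /\ b2 - d2 > - (eta * mu1 * mu2 * K3 / (b3 * d1))) \/
    (- mu1 < b3 - d3 < 0 /\
     b2 - d2 > - (b2 * d1 * (b3 - d3) / (eta * K2 * (b3 - d3 + mu1))))) ->
   exists H S C : R,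
     is_fixed_point b2 b3 d1 d2 d3 mu1 mu2 eta K1 K2 K3 H S C /\
     in_interior_D b3 d3 eta K1 K2 K3 H S C).
Proof.
  split; [|split].
  - intros H S C fp _ _ _ hz. exact (partA b2 b3 d1 d2 d3 mu1 mu2 eta K1 K2 K3 H S C hb2 hd1 hmu1 hmu2 heta hK1 hK2 fp hz).
  - intros H S C fp hi. exact (partB b2 b3 d1 d2 d3 mu1 mu2 eta K1 K2 K3 H S C hb3 hd1 hmu1 heta hK1 hK2 hK3 fp hi).
  - intros [hc|[[e hc]|[[hc1 hc2] hc]]].
    + set (x := (b3 - d3) / b3 * K3).
      assert (hx : 0 < x) by (unfold x; pos).
      assert (hp : pf b3 d3 eta K3 x = 0) by (unfold pf, x; field; lra).
      apply (case_F b2 b3 d1 d2 d3 mu1 mu2 eta K1 K2 K3 x); try lra; try (rewrite hp; lra).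
      assert (hs : sf b3 d3 d1 mu1 eta K1 K3 x = 0) by (unfold sf; rewrite hp; unfold Rdiv; ring).
      assert (hm : mf b3 d3 d1 mu1 eta K1 K2 K3 x = 0) by (unfold mf; rewrite hs; apply Rmin_left; lra).
      unfold Ft. rewrite hm. ring_simplify. pos.
    + apply case_G; try lra.
      assert (hp : pf b3 d3 eta K3 0 = 0) by (unfold pf; rewrite e; field; lra).
      assert (hh : hf b3 d3 d1 mu1 eta K1 K3 0 = mu1 / d1) by (unfold hf; rewrite hp; field; lra).
      assert (hs : sf b3 d3 d1 mu1 eta K1 K3 0 = 0) by (unfold sf; rewrite hp; unfold Rdiv; ring).
      assert (hm : mf b3 d3 d1 mu1 eta K1 K2 K3 0 = 0) by (unfold mf; rewrite hs; apply Rmin_left; lra).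
      unfold Gt, sg. rewrite hm, hh.
      replace (b3 / (K3 * eta * (mu1 / d1)) * (b2 - d2 - eta * (0 * (mu1 / d1))) +
        - (b3 / (K3 * eta * (mu1 / d1)) * b2 / K2 + mu2 / K2) * 0 + mu2)
        with (b3 * d1 / (K3 * eta * mu1) * ((b2 - d2) + eta * mu1 * mu2 * K3 / (b3 * d1))) by (field; repeat split; lra).
      assert (0 < (b2 - d2) + eta * mu1 * mu2 * K3 / (b3 * d1)) by lra.
      assert (0 < b3 * d1 / (K3 * eta * mu1)) by pos.
      apply Rmult_lt_0_compat; assumption.
    + set (s0 := (d3 - b3) * d1 / (eta * (mu1 + b3 - d3))).
      assert (hs0 : 0 < s0) by (unfold s0; pos).
      assert (hp : pf b3 d3 eta K3 0 = (d3 - b3) / eta) by (unfold pf; field; lra).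
      assert (hh : hf b3 d3 d1 mu1 eta K1 K3 0 = (mu1 + b3 - d3) / d1) by (unfold hf; rewrite hp; field; lra).
      assert (hs : sf b3 d3 d1 mu1 eta K1 K3 0 = s0) by (unfold sf, s0; rewrite hp, hh; field; repeat split; lra).
      assert (hc' : b2 - d2 > b2 * s0 / K2).
      { replace (b2 * s0 / K2) with (- (b2 * d1 * (b3 - d3) / (eta * K2 * (b3 - d3 + mu1)))); [lra|].
        unfold s0. field. repeat split; lra. }
      assert (hsK : s0 < K2).
      { assert (b2 * s0 / K2 < b2) by lra.
        apply (Rmult_lt_reg_l (b2 / K2)); [pos|].
        replace (b2 / K2 * K2) with b2 by (field; lra).
        replace (b2 / K2 * s0) with (b2 * s0 / K2) by (field; lra). lra. }
      assert (hm : mf b3 d3 d1 mu1 eta K1 K2 K3 0 = s0) by (unfold mf; rewrite hs; apply Rmin_left; lra).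
      apply (case_F b2 b3 d1 d2 d3 mu1 mu2 eta K1 K2 K3 0); try lra.
      * rewrite hp. left; pos.
      * rewrite hp. replace (eta * ((d3 - b3) / eta)) with (d3 - b3) by (field; lra). lra.
      * unfold Ft. rewrite hm.
        replace (mu2 * 0 + s0 * (b2 - d2 - eta * (0 * hf b3 d3 d1 mu1 eta K1 K3 0) - mu2 * 0 / K2) +
          - (b2 / K2) * (s0 * s0)) with (s0 * ((b2 - d2) - b2 * s0 / K2)) by (field; lra).
        apply Rmult_lt_0_compat; lra.
Qed.
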